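(* Let $p \geq 3$ and let $\mathbf{A}$ be a spectrally unitary $\mathbb{Z}^p$-action on $\mathbb{Z}^3$ with $\mathrm{Fix}(\mathbf{A}) = \{0\}$. Then $\mathrm{Fix}(\mathbf{A}_i) = \{0\}$ for some $i$ with $1 \leq i \leq p$.
   Context: A $\mathbb{Z}^p$-action $\mathbf{A}$ on $\mathbb{Z}^q$ is spectrally unitary if it is a homomorphism from $\mathbb{Z}^p$ to the automorphism group of $\mathbb{Z}^q$ and $1$ is an eigenvalue of $\mathbf{A}(\ell)$ for every $\ell \in \mathbb{Z}^p$. For an action $\mathbf{B}$ of a group $G$ on $\mathbb{Z}^q$, $\mathrm{Fix}(\mathbf{B}) = \{k \in \mathbb{Z}^q : \mathbf{B}(g)k = k \text{ for all } g \in G\}$. For $i = 1,\dots,p$, $G_i = \{(a_1,\dots,a_p) \in \mathbb{Z}^p : a_i = 0\}$ and $\mathbf{A}_i$ denotes the restriction of $\mathbf{A}$ to the subgroup $G_i$; thus $\mathrm{Fix}(\mathbf{A}_i) = \bigcap_{j \neq i} \mathrm{Fix}(\mathbf{A}(e_j))$ where $e_1,\dots,e_p$ is the canonical basis of $\mathbb{Z}^p$. *)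

(* Defs.v *)
From HB Require Import structures.
From mathcomp Require Import all_boot all_order all_algebra all_field.
Set Implicit Arguments. Unset Strict Implicit. Unset Printing Implicit Defensive.
Import GRing.Theory Num.Theory.
Local Open Scope ring_scope.

(* Z^p is modelled as row vectors 'rV[int]_p, Z^q as column vectors
   'cV[int]_q; automorphisms of Z^q are invertible integer matrices
   (unitmx, i.e. determinant +-1), acting by left multiplication. *)

Definition is_Zaction (p q : nat) (A : 'rV[int]_p -> 'M[int]_q) : Prop :=
  (forall a b : 'rV[int]_p, A (a + b) = A a *m A b) /\
  (forall a : 'rV[int]_p, A a \in unitmx).

Definition spectrally_unitary (p q : nat) (A : 'rV[int]_p -> 'M[int]_q) : Prop :=
  is_Zaction A /\
  forall l : 'rV[int]_p,
    eigenvalue (map_mx (fun z : int => (z%:~R : algC)) (A l)) 1.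

Definition in_Fix (p q : nat) (G : pred 'rV[int]_p) (A : 'rV[int]_p -> 'M[int]_q)
  (k : 'cV[int]_q) : Prop :=
  forall g : 'rV[int]_p, G g -> A g *m k = k.

Definition Fix_trivial (p q : nat) (G : pred 'rV[int]_p) (A : 'rV[int]_p -> 'M[int]_q) : Prop :=
  forall k : 'cV[int]_q, in_Fix G A k -> k = 0.

Definition G_sub (p : nat) (i : 'I_p) : pred 'rV[int]_p :=
  fun a => a ord0 i == 0.

(* Main.v *)
Require Import Defs.
From HB Require Import structures.
From mathcomp Require Import all_boot all_order all_algebra all_field.
From Stdlib Require Import Classical.
Set Implicit Arguments. Unset Strict Implicit. Unset Printing Implicit Defensive.
Import GRing.Theory Num.Theory.
Local Open Scope ring_scope.

Section Aux.
Variables (p : nat) (A : 'rV[int]_p -> 'M[int]_3).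
Hypothesis hom : forall a b, A (a + b) = A a *m A b.
Hypothesis unitA : forall a, A a \in unitmx.

Let ee (j : 'I_p) : 'rV[int]_p := delta_mx ord0 j.

Lemma A0 : A 0 = 1%:M.
Proof.
have h := hom 0 0; rewrite addr0 in h.
have := mulKmx (unitA 0) (A 0); rewrite -h mulVmx //.
Qed.

Lemma Acomm a b : A a *m A b = A b *m A a.
Proof. by rewrite -!hom addrC. Qed.

Lemma fix_add a b (k : 'cV[int]_3) : A a *m k = k -> A b *m k = k -> A (a + b) *m k = k.
Proof. by move=> ha hb; rewrite hom -mulmxA hb ha. Qed.

Lemma fix_neg a (k : 'cV[int]_3) : A a *m k = k -> A (- a) *m k = k.
Proof. by move=> ha; rewrite -{1}ha mulmxA -hom addNr A0 mul1mx. Qed.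

Lemma fix_nat a (k : 'cV[int]_3) n : A a *m k = k -> A (a *+ n) *m k = k.
Proof.
move=> ha; elim: n => [|n IH]; first by rewrite mulr0n A0 mul1mx.
by rewrite mulrS fix_add.
Qed.

Lemma fix_scale a (k : 'cV[int]_3) (z : int) : A a *m k = k -> A (z *: a) *m k = k.
Proof.
move=> ha; have -> : z *: a = a *~ z by rewrite -scaler_int intz.
case: z => n; first exact: fix_nat.
by rewrite NegzE mulrNz; apply: fix_neg; apply: fix_nat.
Qed.

Lemma ee_G (i j : 'I_p) : j != i -> G_sub i (ee j).
Proof. by move=> ji; rewrite /G_sub /ee mxE eqxx /=; rewrite eq_sym in ji; rewrite (negbTE ji). Qed.

Lemma G_add i (a b : 'rV[int]_p) : G_sub i a -> G_sub i b -> G_sub i (a + b).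
Proof. by rewrite /G_sub mxE => /eqP -> /eqP ->; rewrite addr0. Qed.

Lemma fix_all i k : in_Fix (G_sub i) A k -> A (ee i) *m k = k -> in_Fix predT A k.
Proof.
move=> hF he g _.
have -> : g = (g ord0 i) *: ee i + (g - (g ord0 i) *: ee i) by rewrite addrC subrK.
apply: fix_add; first exact: fix_scale.
by apply: hF; rewrite /G_sub /= /ee !mxE !eqxx /= mulr1 subrr.
Qed.

End Aux.

Lemma col_inj_row_inj (F : fieldType) n (M : 'M[F]_n) :
  (forall x : 'cV_n, M *m x = 0 -> x = 0) ->
  forall v : 'rV_n, v *m M = 0 -> v = 0.
Proof.
move=> hM v hv.
have hu : M \in unitmx.
  rewrite -unitmx_tr -row_free_unit -kermx_eq0; apply/eqP/row_matrixP => i.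
  rewrite row0; apply: trmx_inj; rewrite trmx0; apply: hM.
  by apply: trmx_inj; rewrite trmx_mul trmxK -row_mul mulmx_ker row0 !trmx0.
by rewrite -(mulmxK hu v) hv mul0mx.
Qed.

Lemma colmxE (F : 'I_3 -> 'cV[int]_3) (M : 'M[int]_3) r c :
  (M *m \matrix_(r0, c0) F c0 r0 ord0) r c = (M *m F c) r ord0.
Proof. by rewrite !mxE; apply: eq_bigr => k _; rewrite mxE. Qed.

Lemma cV_neq0 (v : 'cV[int]_3) : v != 0 -> exists r, v r ord0 != 0.
Proof.
move=> hv; apply: NNPP => hn; move/eqP: hv; apply; apply/matrixP => r j.
rewrite ord1 mxE; apply: NNPP => h; apply: hn; exists r; exact/eqP.
Qed.

Local Notation fC M := (map_mx (fun z : int => (z%:~R : algC)) M).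

Theorem lemma2p7 (p : nat) (A : 'rV[int]_p -> 'M[int]_3) :
  (3 <= p)%N ->
  spectrally_unitary A ->
  Fix_trivial predT A ->
  exists i : 'I_p, Fix_trivial (G_sub i) A.
Proof.
move=> hp [[hom unitA] eig] hfix.
apply: NNPP => hno.
pose idx (c : 'I_3) : 'I_p := widen_ord hp c.
have idx_inj : injective idx.
  by move=> c1 c2 /(congr1 val) /= /val_inj.
pose ee (j : 'I_p) : 'rV[int]_p := delta_mx ord0 j.
have H : forall c : 'I_3, exists w : 'cV[int]_3,
    in_Fix (G_sub (idx c)) A w /\ w != 0.
  move=> c; apply: NNPP => hc; apply: hno; exists (idx c) => k hk.
  apply: NNPP => hk0; apply: hc; exists k; split => //; exact/eqP.
have [w Hw] := fin_all_exists H.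
pose u c := A (ee (idx c)) *m w c - w c.
have F1 : forall c, in_Fix (G_sub (idx c)) A (u c).
  move=> c g hg; rewrite /u mulmxBr mulmxA Acomm // -mulmxA.
  by rewrite (proj1 (Hw c) g hg).
have F2 : forall c, A (ee (idx c)) *m u c != u c.
  move=> c; apply/eqP => he.
  have h0 : u c = 0 := hfix _ (fix_all hom unitA (F1 c) he).
  move/eqP: h0; rewrite /u subr_eq0 => /eqP he2.
  by move/eqP: (proj2 (Hw c)); apply; apply: hfix; apply: (fix_all hom unitA (proj1 (Hw c))).
have F4 : forall c c', c' != c -> A (ee (idx c')) *m u c = u c.
  move=> c c' hc; apply: F1; apply: ee_G.
  by apply: contra hc => /eqP /idx_inj ->.
pose s := \sum_(c < 3) ee (idx c).
have F3 : forall c, A s *m w c = A (ee (idx c)) *m w c.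
  move=> c; rewrite /s (bigD1 c) //= hom -mulmxA (proj1 (Hw c)) //.
  apply: (big_ind (G_sub (idx c))).
  - by rewrite /G_sub /= mxE.
  - exact: G_add.
  move=> c' hc; apply: ee_G.
  by apply: contra hc => /eqP /idx_inj ->.
pose W := \matrix_(r, c) w c r ord0.
pose U := \matrix_(r, c) u c r ord0.
have MW : (A s - 1%:M) *m W = U.
  by apply/matrixP => r c; rewrite colmxE mulmxBl mul1mx F3 /U [RHS]mxE.
have hx : forall x : 'cV[algC]_3, fC U *m x = 0 -> x = 0.
  move=> x hx; apply/matrixP => c j; rewrite ord1 [RHS]mxE.
  pose N := (A (ee (idx c)) - 1%:M) *m U.
  have hN : forall c', c' != c -> forall r, N r c' = 0.
    by move=> c' hc' r; rewrite /N colmxE mulmxBl mul1mx (F4 c' c) 1?eq_sym // subrr mxE.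
  have hNc : (A (ee (idx c)) - 1%:M) *m u c != 0.
    by rewrite mulmxBl mul1mx subr_eq0; exact: F2.
  have [r hr] := cV_neq0 hNc.
  have : (fC N *m x) r ord0 = 0 by rewrite /N map_mxM -mulmxA hx mulmx0 mxE.
  rewrite mxE (bigD1 c) //= big1 ?addr0; last first.
    by move=> c' hc'; rewrite mxE hN // mul0r.
  move/eqP; rewrite mulf_eq0 mxE intr_eq0 /N colmxE (negbTE hr) /=.
  by move/eqP.
have [v hv vn0] := eigenvalueP (eig s).
have : v *m fC U = 0.
  by rewrite -MW map_mxM map_mxB map_mx1 mulmxA mulmxBr hv scale1r mulmx1 subrr mul0mx.
by move/(col_inj_row_inj hx) => v0; rewrite v0 eqxx in vn0.
Qed.
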